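(* Let $M$ be an $(\mathcal R,\mathfrak g)$-module such that $\sigma(\mathfrak g_{\ge1})$ acts as zero on $M$. Then every additive subgroup $M'\subseteq M$ which is stable under the $\mathcal R$-action and under $\rho_{\mathfrak g}(\mathfrak g)$ is also stable under $\sigma(\mathfrak g_{\ge0})$, i.e. $M'$ is an $(\mathcal R,\mathfrak g)$-submodule.
   Context: $\mathbb F$ algebraically closed of characteristic $0$, $m,n\ge1$. $\mathcal R=\mathbb F[x_1,\dots,x_m]\otimes\Lambda(y_1,\dots,y_n)$ ($x_i$ even, $y_s$ odd), parity $\wp$. $\mathfrak g=W(m,n)$ the Lie superalgebra of superderivations of $\mathcal R$, free over $\mathcal R$ on even $\partial_i$ ($\partial_ix_j=\delta_{ij}$) and odd $D_t$ ($D_ty_s=\delta_{ts}$); $\mathfrak g_{\ge k}=\bigoplus_{i\ge k}\mathfrak g_i$ for the grading where $f\partial_j,fD_t\in\mathfrak g_{\deg f-1}$. An $(\mathcal R,\mathfrak g)$-module is an additive group $M$ with an $\mathcal R$-module structure $f\mapsto f_{\mathcal R}$, a $\mathfrak g$-module structure $\rho=\rho_{\mathfrak g}$ and a $\mathfrak g_{\ge0}$-module structure $\sigma$ such that for all $f\in\mathcal R$, $D\in\mathfrak g$, $D'\in\mathfrak g_{\ge0}$, $X\in\{\partial_i,D_j\}$: (i) $[\rho(D),f_{\mathcal R}]=(Df)_{\mathcal R}$; (ii) $[\sigma(D'),f_{\mathcal R}]=0$; (iii) $[\rho(X),\sigma(D')]=0$; (iv) $\rho(fX)=f_{\mathcal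 R}\circ\rho(X)+\sum_{i=1}^m(\partial_if)_{\mathcal R}\circ\sigma(x_iX)+(-1)^{\wp(f)+1}\sum_{j=1}^n(D_jf)_{\mathcal R}\circ\sigma(y_jX)$ (brackets are supercommutators). *)

(* Defs.v *)
From HB Require Import structures.
From mathcomp Require Import all_boot all_order all_algebra.
From mathcomp Require Import mpoly.
Set Implicit Arguments. Unset Strict Implicit. Unset Printing Implicit Defensive.
Import Order.TTheory GRing.Theory.
Local Open Scope ring_scope.

(* The supercommutative algebra R = F[x_1..x_m] (x) Lambda(y_1..y_n).  *)
(* An element f is stored through its coordinates on the basis y_S,    *)
(* S a subset of {1..n} (y_S = y_{s1} ... y_{sk}, s1 < ... < sk):      *)
(*   f = \sum_S (f S) y_S  with  f S in F[x_1..x_m].                   *)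
Definition Rsup (F : fieldType) (m n : nat) :=
  {ffun {set 'I_n} -> {mpoly F[m]}}.

Section SuperAlg.
Variables (F : fieldType) (m n : nat).
Local Notation R := (Rsup F m n).

(* y_A y_B = ysign A B y_{A u B} for disjoint A, B *)
Definition ysign (A B : {set 'I_n}) : F :=
  (-1) ^+ #|[set p : 'I_n * 'I_n | (p.1 \in A) && (p.2 \in B) && (p.2 < p.1)%N]|.

Definition Rmul (f g : R) : R :=
  [ffun S => \sum_(A : {set 'I_n}) \sum_(B : {set 'I_n} |
       [disjoint A & B] && (A :|: B == S)) ysign A B *: (f A * g B)].

Definition Rconst (c : F) : R := [ffun S => if S == set0 then c%:MP else 0].
Definition Rone : R := Rconst 1.
Definition Rx (i : 'I_m) : R := [ffun S => if S == set0 then 'X_i else 0].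
Definition Ry (s : 'I_n) : R := [ffun S => if S == [set s] then 1 else 0].

(* f is homogeneous of parity p (p = false : even, p = true : odd) *)
Definition Rpar (p : bool) (f : R) : Prop :=
  forall S : {set 'I_n}, odd #|S| != p -> f S = 0.

(* f lies in the sum of the homogeneous components of degree >= k
   (deg x_i = deg y_s = 1) *)
Definition Rge (k : nat) (f : R) : Prop :=
  forall (S : {set 'I_n}) (mo : 'X_{1..m}), mo \in msupp (f S) ->
    (k <= mdeg mo + #|S|)%N.

Definition Rdx (i : 'I_m) (f : R) : R := [ffun S => mderiv i (f S)].

(* odd (left) derivation D_t, D_t y_s = delta_ts *)
Definition Rdy (t : 'I_n) (f : R) : R :=
  [ffun S : {set 'I_n} => if t \in S then 0
             else (-1) ^+ #|[set s in S | (s < t)%N]| *: f (t |: S)].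

(* W(m,n): free R-module on the even d_i and the odd D_t.              *)
(* D = (a, b) stands for \sum_i a_i d_i + \sum_t b_t D_t.              *)
Definition Wmn := ({ffun 'I_m -> R} * {ffun 'I_n -> R})%type.

Definition Wact (D : Wmn) (h : R) : R :=
  \sum_(i < m) Rmul (D.1 i) (Rdx i h) + \sum_(t < n) Rmul (D.2 t) (Rdy t h).

Definition Wdx (f : R) (i : 'I_m) : Wmn := ([ffun j => if j == i then f else 0], 0).
Definition Wdy (f : R) (t : 'I_n) : Wmn := (0, [ffun s => if s == t then f else 0]).

Definition Wmulgen (f : R) (x : 'I_m + 'I_n) : Wmn :=
  match x with inl i => Wdx f i | inr t => Wdy f t end.
Definition Wgen (x : 'I_m + 'I_n) : Wmn := Wmulgen Rone x.
Definition Wgenpar (x : 'I_m + 'I_n) : bool := if x is inr _ then true else false.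

Definition Wpar (p : bool) (D : Wmn) : Prop :=
  (forall i, Rpar p (D.1 i)) /\ (forall t, Rpar (~~ p) (D.2 t)).

(* D in g_{>= k}: f d_j, f D_t lie in g_{deg f - 1} *)
Definition Wge (k : nat) (D : Wmn) : Prop :=
  (forall i, Rge k.+1 (D.1 i)) /\ (forall t, Rge k.+1 (D.2 t)).

Definition Wscale (c : F) (D : Wmn) : Wmn :=
  ([ffun i => c *: D.1 i], [ffun t => c *: D.2 t]).

End SuperAlg.

Definition sgn (F : pzRingType) (p q : bool) : F := (-1) ^+ (p && q).

Definition scomm (M : zmodType) (p q : bool) (A B : M -> M) : M -> M :=
  fun v => A (B v) - B (A v) *~ sgn int p q.

Definition additive_map (M : zmodType) (A : M -> M) : Prop :=
  forall u v, A (u + v) = A u + A v.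

Definition is_RgModule (F : fieldType) (m n : nat) (M : zmodType)
    (Ract : Rsup F m n -> M -> M) (rho sigma : Wmn F m n -> M -> M) : Prop :=
  [/\ (forall f, additive_map (Ract f)),
      (forall f g v, Ract (f + g) v = Ract f v + Ract g v),
      (forall v, Ract (Rone F m n) v = v) &
      (forall f g v, Ract (Rmul f g) v = Ract f (Ract g v))] /\
  (* g-module structure rho (F acting on M through the constants of R) *)
  [/\ (forall D, additive_map (rho D)),
      (forall D E v, rho (D + E) v = rho D v + rho E v),
      (forall c D v, rho (Wscale c D) v = Ract (Rconst m n c) (rho D v)) &
      (forall p q D E G, Wpar p D -> Wpar q E ->
         (forall h, Wact G h = Wact D (Wact E h) - sgn _ p q * Wact E (Wact D h)) ->
         forall v, rho G v = scomm p q (rho D) (rho E) v)] /\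
  [/\ (forall D, Wge 0 D -> additive_map (sigma D)),
      (forall D E, Wge 0 D -> Wge 0 E -> forall v,
         sigma (D + E) v = sigma D v + sigma E v),
      (forall c D, Wge 0 D -> forall v,
         sigma (Wscale c D) v = Ract (Rconst m n c) (sigma D v)) &
      (forall p q D E G, Wge 0 D -> Wge 0 E -> Wpar p D -> Wpar q E ->
         (forall h, Wact G h = Wact D (Wact E h) - sgn _ p q * Wact E (Wact D h)) ->
         forall v, sigma G v = scomm p q (sigma D) (sigma E) v)] /\
  [/\
      (forall p q D f, Wpar p D -> Rpar q f -> forall v,
         scomm p q (rho D) (Ract f) v = Ract (Wact D f) v),
      (forall p q D f, Wge 0 D -> Wpar p D -> Rpar q f -> forall v,
         scomm p q (sigma D) (Ract f) v = 0),
      (forall x p D, Wge 0 D -> Wpar p D -> forall v,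
         scomm (Wgenpar x) p (rho (Wgen F x)) (sigma D) v = 0) &
      (forall x q f, Rpar q f -> forall v,
         rho (Wmulgen f x) v =
           Ract f (rho (Wgen F x) v)
           + \sum_(i < m) Ract (Rdx i f) (sigma (Wmulgen (Rx F n i) x) v)
           + (\sum_(j < n) Ract (Rdy j f) (sigma (Wmulgen (Ry F m j) x) v))
               *~ sgn int (~~ q) true)].

(* Main.v *)
Require Import Defs.
From HB Require Import structures.
From mathcomp Require Import all_boot all_order all_algebra.
From mathcomp Require Import mpoly.
Import GRing.Theory.
Local Open Scope ring_scope.


Section Gen.
Variables (F : fieldType) (m n : nat).
Local Notation R := (Rsup F m n).
Local Notation W := (Wmn F m n).

Lemma Rge_add k (f g : R) : Rge k f -> Rge k g -> Rge k (f + g).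
Proof.
move=> hf hg S mo; rewrite ffunE => /msuppD_le; rewrite mem_cat => /orP[].
  exact: hf.
exact: hg.
Qed.

Lemma Rge_0 k : Rge k (0 : R).
Proof. by move=> S mo; rewrite ffunE mcoeff_msupp mcoeff0 eqxx. Qed.

Lemma Rge_scale k c (f : R) : Rge k f -> Rge k (c *: f).
Proof. by move=> hf S mo; rewrite ffunE => /msuppZ_le; apply: hf. Qed.

Lemma Rge_weak k (f : R) : Rge k.+1 f -> Rge k f.
Proof. by move=> hf S mo /hf; apply: ltnW. Qed.

Lemma Wge_add k (D E : W) : Wge k D -> Wge k E -> Wge k (D + E).
Proof.
move=> [h1 h2] [h3 h4]; split=> i /=; rewrite ffunE; exact: Rge_add.
Qed.

Lemma Wge_0 k : Wge k (0 : W).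
Proof. by split=> i /=; rewrite ffunE; apply: Rge_0. Qed.

Lemma Wge_scale k c (D : W) : Wge k D -> Wge k (Wscale c D).
Proof. by move=> [h1 h2]; split=> i /=; rewrite ffunE; apply: Rge_scale. Qed.

Lemma Wge_weak k (D : W) : Wge k.+1 D -> Wge k D.
Proof. by move=> [h1 h2]; split=> i; apply: Rge_weak. Qed.

Lemma Wge_mulgen k (f : R) x : Rge k.+1 f -> Wge k (Wmulgen f x).
Proof.
move=> hf; case: x => i; split=> j /=; rewrite ffunE ?(Rge_0);
  try case: ifP => _; by [exact: hf | exact: Rge_0].
Qed.

Lemma Wmulgen_add (f g : R) x : Wmulgen (f + g) x = Wmulgen f x + Wmulgen g x.
Proof.
case: x => i /=; rewrite /Wdx /Wdy /=; congr pair; rewrite ?addr0 //;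
  apply/ffunP => j; rewrite !ffunE; by case: ifP; rewrite ?addr0.
Qed.

Lemma Wmulgen_0 x : Wmulgen (0 : R) x = 0.
Proof.
case: x => i /=; rewrite /Wdx /Wdy /=; congr pair;
  apply/ffunP => j; by rewrite !ffunE; case: ifP.
Qed.

Lemma Wmulgen_scale c (f : R) x : Wmulgen (c *: f) x = Wscale c (Wmulgen f x).
Proof.
case: x => i /=; rewrite /Wdx /Wdy /Wscale /=; congr pair;
  apply/ffunP => j; rewrite !ffunE ?scaler0 //; by case: ifP; rewrite ?scaler0.
Qed.

Lemma Wmulgen_sum (I : Type) (r : seq I) (P : pred I) (G : I -> R) x :
  Wmulgen (\sum_(i <- r | P i) G i) x = \sum_(i <- r | P i) Wmulgen (G i) x.
Proof.
by apply: (big_morph (fun f => Wmulgen f x)); [move=> f g; apply: Wmulgen_add | apply: Wmulgen_0].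
Qed.

Lemma fst_sum (I : Type) (r : seq I) (P : pred I) (G : I -> W) :
  (\sum_(i <- r | P i) G i).1 = \sum_(i <- r | P i) (G i).1.
Proof. by apply: (big_morph fst). Qed.

Lemma snd_sum (I : Type) (r : seq I) (P : pred I) (G : I -> W) :
  (\sum_(i <- r | P i) G i).2 = \sum_(i <- r | P i) (G i).2.
Proof. by apply: (big_morph snd). Qed.

Lemma W_decomp (D : W) :
  D = \sum_(i < m) Wmulgen (D.1 i) (inl i) + \sum_(t < n) Wmulgen (D.2 t) (inr t).
Proof.
case: D => a b; congr pair => /=; rewrite ?fst_sum ?snd_sum /=.
  rewrite big1_eq addr0.
  apply/ffunP => j; rewrite sum_ffunE (bigD1 j) //= ffunE eqxx big1 ?addr0 //.
  by move=> i /negbTE; rewrite ffunE eq_sym => ->.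
rewrite big1_eq add0r.
apply/ffunP => j; rewrite sum_ffunE (bigD1 j) //= ffunE eqxx big1 ?addr0 //.
by move=> i /negbTE; rewrite ffunE eq_sym => ->.
Qed.

End Gen.


Section Lin.
Variables (F : fieldType) (m n : nat).
Local Notation R := (Rsup F m n).

Definition Lin (f : R) : R :=
  \sum_(k < m) (f set0)@_U_(k) *: Rx F n k + \sum_(j < n) (f [set j])@_0 *: Ry F m j.

Lemma LinE (f : R) S :
  Lin f S = \sum_(k < m) (f set0)@_U_(k) *: Rx F n k S
          + \sum_(j < n) (f [set j])@_0 *: Ry F m j S.
Proof.
rewrite /Lin ffunE !sum_ffunE; congr (_ + _); apply: eq_bigr => i _; by rewrite ffunE.
Qed.

Lemma Rge2_sub (f : R) : Rge 1 f -> Rge 2 (f - Lin f).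
Proof.
move=> hf S mo.
have -> : (f - Lin f) S = f S - Lin f S by rewrite [LHS]ffunE ffunE.
rewrite LinE mcoeff_msupp.
have [->|SnZ] := eqVneq S set0.
  rewrite cards0 addn0.
  have -> : \sum_(j < n) (f [set j])@_0 *: Ry F m j set0 = 0.
    apply: big1 => j _; rewrite ffunE.
    by rewrite eq_sym -cards_eq0 cards1 scaler0.
  rewrite addr0.
  under eq_bigr do rewrite ffunE eqxx.
  rewrite mcoeffB raddf_sum /=.
  under eq_bigr do rewrite mcoeffZ mcoeffX.
  case: (ltnP 1 (mdeg mo)) => // hle.
  case: (eqVneq (mdeg mo) 1%N) => [/eqP/mdeg1P [i /eqP ->]|h1].
    rewrite (bigD1 i) //= eqxx mulr1 big1 ?addr0 ?subrr ?eqxx //.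
    move=> k hk; case: eqP; rewrite ?mulr0 // => /(congr1 (fun mo : 'X_{1..m} => mo i)).
    by rewrite !mnm1E eqxx (negbTE hk).
  have : mdeg mo == 0%N by rewrite leq_eqVlt (negbTE h1) ltnS leqn0 in hle.
  rewrite mdeg_eq0 => /eqP ->.
  rewrite big1 ?subr0; last by move=> k _; rewrite mnm1_eq0 mulr0.
  move=> h0; have := hf set0 0%MM; rewrite mcoeff_msupp h0 mdeg0 cards0 => /(_ isT).
  by [].
rewrite big1 ?add0r; last by move=> k _; rewrite ffunE (negbTE SnZ) scaler0.
case: (ltnP 1 #|S|) => [h2 _|]; first exact: (leq_trans h2 (leq_addl _ _)).
rewrite leq_eqVlt ltnS leqn0 cards_eq0 (negbTE SnZ) orbF => /cards1P [j0 ->].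
rewrite cards1 addn1 ltnS lt0n mdeg_eq0.
case: (eqVneq mo 0%MM) => [->|//].
rewrite (bigD1 j0) //= ffunE eqxx big1 ?addr0.
  by rewrite mcoeffB mcoeffZ mcoeff1 eqxx mulr1 subrr eqxx.
by move=> j hj; rewrite ffunE (inj_eq set1_inj) eq_sym (negbTE hj) scaler0.
Qed.
End Lin.


Section Comp.
Variables (F : fieldType) (m n : nat).
Local Notation R := (Rsup F m n).

Lemma setU1_neq0 (T : finType) (j : T) (S : {set T}) : (j |: S == set0) = false.
Proof. by apply/negbTE/set0Pn; exists j; rewrite setU11. Qed.

Lemma Rpar_Rx k : Rpar false (Rx F n k : R).
Proof. by move=> S; rewrite ffunE; case: (eqVneq S set0) => [->|_]; rewrite ?cards0. Qed.

Lemma Rpar_Ry k : Rpar true (Ry F m k : R).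
Proof. by move=> S; rewrite ffunE; case: (eqVneq S [set k]) => [->|_]; rewrite ?cards1. Qed.

Lemma Rdx_Rx i k : Rdx i (Rx F n k : R) = if i == k then Rone F m n else 0.
Proof.
apply/ffunP => S; case: (eqVneq i k) => [->|hik]; rewrite !ffunE.
  case: ifP => _; rewrite ?mderiv0 //.
  rewrite mderivX mnm1E eqxx.
  have -> : (U_(k) - U_(k))%MM = 0%MM by rewrite -{1}(add0m U_(k)%MM) addmK.
  by rewrite mpolyX0 scale1r.
case: ifP => _; rewrite ?mderiv0 //.
by rewrite mderivX mnm1E eq_sym (negbTE hik) scale0r.
Qed.

Lemma Rdy_Rx j k : Rdy j (Rx F n k : R) = 0.
Proof.
apply/ffunP => S; rewrite !ffunE; case: ifP => // _.
by rewrite setU1_neq0 scaler0.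
Qed.

Lemma Rdx_Ry i k : Rdx i (Ry F m k : R) = 0.
Proof.
apply/ffunP => S; rewrite !ffunE; case: ifP => _; last by rewrite mderiv0.
by rewrite mderivC.
Qed.

Lemma Rdy_Ry j k : Rdy j (Ry F m k : R) = if j == k then Rone F m n else 0.
Proof.
apply/ffunP => S; case: (eqVneq j k) => [<-|hjk]; rewrite !ffunE.
  case: (eqVneq S set0) => [->|SnZ].
    rewrite inE setU0 eqxx.
    have -> : [set s in (set0 : {set 'I_n}) | (s < j)%N] = set0.
      by apply/setP => s; rewrite !inE.
    by rewrite cards0 expr0 scale1r.
  case: ifP => // jS.
  case: eqP; last by rewrite scaler0.
  move=> h; case/set0Pn: SnZ => s sS.
  have : s \in j |: S by rewrite inE sS orbT.
  by rewrite h inE => /eqP hs; move: jS; rewrite -hs sS.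
case: ifP => // _.
case: eqP; last by rewrite scaler0.
move=> h; have : j \in j |: S by rewrite setU11.
by rewrite h inE (negbTE hjk).
Qed.

End Comp.


Lemma Rge_Rx (F : fieldType) m n k : Rge 1 (Rx F n k : Rsup F m n).
Proof.
move=> S mo; rewrite ffunE; case: (eqVneq S set0) => [->|_]; last first.
  by rewrite mcoeff_msupp mcoeff0 eqxx.
rewrite mcoeff_msupp mcoeffX; have [<-|] := eqVneq U_(k)%MM mo; last by rewrite eqxx.
by rewrite mdeg1.
Qed.

Lemma Rge_Ry (F : fieldType) m n k : Rge 1 (Ry F m k : Rsup F m n).
Proof.
move=> S mo; rewrite ffunE; case: (eqVneq S [set k]) => [->|_]; last first.
  by rewrite mcoeff_msupp mcoeff0 eqxx.
by rewrite cards1 addn1.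
Qed.

Theorem mainTheorem15 (F : closedFieldType) (charF0 : [pchar F] =i pred0)
    (m n : nat) (Hm : (1 <= m)%N) (Hn : (1 <= n)%N)
    (M : zmodType) (Ract : Rsup F m n -> M -> M) (rho sigma : Wmn F m n -> M -> M)
    (HM : is_RgModule Ract rho sigma)
    (Hsigma1 : forall D, Wge 1 D -> forall v, sigma D v = 0)
    (M' : {pred M})
    (HM'0 : 0 \in M')
    (HM'D : forall u v, u \in M' -> v \in M' -> u + v \in M')
    (HM'N : forall u, u \in M' -> - u \in M')
    (HM'R : forall f u, u \in M' -> Ract f u \in M')
    (HM'rho : forall D u, u \in M' -> rho D u \in M') :
  forall D, Wge 0 D -> forall u, u \in M' -> sigma D u \in M'.
Proof.
case: HM => [[RA1 RA2 RA3 RA4] [[rh1 rh2 rh3 rh4] [[s1 s2 s3 s4] [a1 a2 a3 a4]]]].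
have Ract0 : forall v, Ract 0 v = 0.
  by move=> v; apply: (addrI (Ract 0 v)); rewrite addr0 -RA2 addr0.
pose P D := Wge 0 D /\ forall u, u \in M' -> sigma D u \in M'.
have P0 : P 0.
  split; first exact: Wge_0.
  have h0 : forall v, sigma 0 v = 0.
    move=> v; apply: (addrI (sigma 0 v)); rewrite addr0 -s2 ?addr0 //; exact: Wge_0.
  by move=> u _; rewrite h0.
have PD : forall D E, P D -> P E -> P (D + E).
  move=> D E [hD sD] [hE sE]; split; first exact: Wge_add.
  by move=> u hu; rewrite s2 //; apply: HM'D; [apply: sD | apply: sE].
have Psum : forall k (G : 'I_k -> Wmn F m n), (forall i, P (G i)) -> P (\sum_(i < k) G i).
  by move=> k G hG; apply: big_ind => // i _; apply: hG.
have Pscale : forall c D, P D -> P (Wscale c D).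
  move=> c D [hD sD]; split; first exact: Wge_scale.
  by move=> u hu; rewrite s3 //; apply/HM'R/sD.
have Phigh : forall f x, Rge 2 f -> P (Wmulgen f x).
  move=> f x hf; split; first by apply: Wge_mulgen; apply: Rge_weak.
  by move=> u _; rewrite Hsigma1 //; apply: Wge_mulgen.
have PRx : forall k x, P (Wmulgen (Rx F n k) x).
  move=> k x; split; first by apply: Wge_mulgen; apply: Rge_Rx.
  move=> u hu; have := a4 x false (Rx F n k) (@Rpar_Rx _ _ _ k) u.
  rewrite (bigD1 k) //= Rdx_Rx eqxx RA3 big1; last first.
    by move=> i /negbTE hi; rewrite Rdx_Rx hi Ract0.
  rewrite addr0 big1; last by move=> j _; rewrite Rdy_Rx Ract0.
  rewrite mul0rz addr0 => h.
  have -> : sigma (Wmulgen (Rx F n k) x) u =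
            rho (Wmulgen (Rx F n k) x) u - Ract (Rx F n k) (rho (Wgen F x) u).
    by rewrite h [Ract _ _ + _]addrC addrK.
  by apply: HM'D; [apply: HM'rho | apply/HM'N/HM'R/HM'rho].
have PRy : forall k x, P (Wmulgen (Ry F m k) x).
  move=> k x; split; first by apply: Wge_mulgen; apply: Rge_Ry.
  move=> u hu; have := a4 x true (Ry F m k) (@Rpar_Ry _ _ _ k) u.
  rewrite big1; last by move=> i _; rewrite Rdx_Ry Ract0.
  rewrite (bigD1 k) //= Rdy_Ry eqxx RA3 big1; last first.
    by move=> j /negbTE hj; rewrite Rdy_Ry hj Ract0.
  rewrite /sgn /= expr0 mulr1z addr0 addr0 => h.
  have -> : sigma (Wmulgen (Ry F m k) x) u =
            rho (Wmulgen (Ry F m k) x) u - Ract (Ry F m k) (rho (Wgen F x) u).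
    by rewrite h [Ract _ _ + _]addrC addrK.
  by apply: HM'D; [apply: HM'rho | apply/HM'N/HM'R/HM'rho].
have Pgen : forall f x, Rge 1 f -> P (Wmulgen f x).
  move=> f x hf; rewrite -(subrK (@Lin _ _ _ f) f) Wmulgen_add; apply: (PD).
    by apply: (Phigh); apply: Rge2_sub.
  rewrite /Lin Wmulgen_add !Wmulgen_sum; apply: (PD); apply: (Psum) => i;
    rewrite Wmulgen_scale; apply: (Pscale); [apply: (PRx) | apply: (PRy)].
move=> D hD u hu; rewrite (@W_decomp _ _ _ D).
have : P (\sum_(i < m) Wmulgen (D.1 i) (inl i) + \sum_(t < n) Wmulgen (D.2 t) (inr t)).
  by apply: (PD); apply: (Psum) => i; apply: (Pgen); [apply: hD.1 | apply: hD.2].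
by case=> _; apply.
Qed.
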